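(* In the EnSolver setting described in the context (ensemble of $M$ base models, output domain of size $N_{\mathcal{S}}$, threshold $\tau$ with $M(1-\tau)$ a positive integer, and assumptions of independence and (A1)–(A3)), for inputs $x$ the out-of-distribution error bound satisfies $$\mathcal{E}(M, N_{\mathcal{S}}, \tau) > p\left( \exists s \ne s_x,\ n(x, s) \ge M(1-\tau) + 1 \,\middle|\, x \in \mathcal{X}^{\text{in}} \right).$$
   Context: Setting: $\mathcal{S}$ is a finite set of output strings with $N_{\mathcal{S}} = |\mathcal{S}| \ge 2$; inputs $x \in \mathcal{X}$ are drawn from a probability distribution $p$ on $\mathcal{X}$, each $x$ having a single correct output $s_x \in \mathcal{S}$. $\mathcal{X}$ is the disjoint union of the in-distribution set $\mathcal{X}^{\text{in}}$ and the out-of-distribution set $\mathcal{X}^{\text{out}}$, and $\alpha = p(x \in \mathcal{X}^{\text{in}})$. An ensemble consists of $M$ base models $m_1, \dots, m_M$, each of which produces a (random) prediction $m_i(x) \in \mathcal{S}$ on input $x$; probabilities are taken jointly over $x \sim p$ and the predictions, and the base models make their predictions independently of each other given the input (in particular conditionally on $x \in \mathcal{X}^{\text{in}}$ and conditionally on $x \in \mathcal{X}^{\text{out}}$). Let $\beta_i = p(m_i(x) = s_x \mid x \in \mathcal{X}^{\text{in}})$, $\beta_{\text{min}} = \min_i \beta_i$, $\beta_{\text{max}} = \max_i \beta_i$. Assumptions: (A1) $\beta_{\text{min}} > 1/N_{\mathcal{S}}$; (A2) for each $i$, conditionally on $x \in \mathcal{X}^{\text{in}}$, $m_i(x)$ equals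 each incorrect string $s \neq s_x$ with probability $(1-\beta_i)/(N_{\mathcal{S}}-1)$; (A3) for each $i$, conditionally on $x \in \mathcal{X}^{\text{out}}$, $m_i(x)$ equals each $s \in \mathcal{S}$ with probability $1/N_{\mathcal{S}}$. For $x$ and $s \in \mathcal{S}$, $n(x,s)$ is the number of base models with $m_i(x) = s$. The threshold $\tau \in (0,1]$ is such that $M(1-\tau)$ is a positive integer. The EnSolver $m$ acts as follows on input $x$: let $p_{\max} = \max_{s} n(x,s)/M$ and uncertainty $u = 1 - p_{\max}$; if $u < \tau$ it outputs a string $y$ maximizing $n(x,\cdot)$, otherwise it outputs a special skip symbol $s_{\text{skip}}$. The out-of-distribution error bound is $\mathcal{E}(M, N_{\mathcal{S}}, \tau) = \binom{M}{\lfloor M/2 \rfloor} (N_{\mathcal{S}})^{-M(1-\tau)}$. *)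

(* Defs.v *)
From HB Require Import structures.
From mathcomp Require Import all_boot all_order all_algebra.
From mathcomp Require Import all_classical all_reals all_analysis.
Set Implicit Arguments. Unset Strict Implicit. Unset Printing Implicit Defensive.
Import Order.TTheory GRing.Theory Num.Theory.
Local Open Scope classical_set_scope.
Local Open Scope ring_scope.

Section EnsDefs.
Context {d : measure_display} {T : measurableType d} {R : realType}.

Definition cprob (P : probability T R) (B A : set T) : R :=
  fine (P (A `&` B)) / fine (P B).

Definition nvotes (S : finType) (M : nat) (m : 'I_M -> T -> S) (w : T) (s : S) : nat :=
  #|[set i : 'I_M | m i w == s]|.

Definition cond_indep (P : probability T R) (B : set T)
    (S : finType) (M : nat) (m : 'I_M -> T -> S) : Prop :=
  forall (J : {set 'I_M}) (t : 'I_M -> S),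
    cprob P B (\big[setI/setT]_(i in J) (m i @^-1` [set t i]))
    = \prod_(i in J) cprob P B (m i @^-1` [set t i]).

End EnsDefs.

Definition Ebound {R : realType} (M N : nat) (tau : R) : R :=
  ('C(M, M./2))%:R * powR (N%:R) (- (M%:R * (1 - tau))).

(* Main.v *)
Require Import Defs.
From HB Require Import structures.
From mathcomp Require Import all_boot all_order all_algebra.
From mathcomp Require Import all_classical all_reals all_analysis.
From mathcomp Require Import ring lra zify.
Import Order.TTheory GRing.Theory Num.Theory.

Lemma bin_mono n a b : a <= b -> b.*2 <= n -> 'C(n, a) <= 'C(n, b).
Proof.
elim: b => [|b IH]; first by rewrite leqn0 => /eqP ->.
rewrite leq_eqVlt => /orP[/eqP -> //|]; rewrite ltnS => ab hb.
apply: (leq_trans (IH ab _)); first lia.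
have := mul_bin_left n b.
have : b.+1 <= n - b by lia.
move: ('C(n, b.+1)) ('C(n, b)) => X Y h1 h2.
have : b.+1 * Y <= b.+1 * X.
  rewrite h2; exact: leq_mul.
by rewrite leq_pmul2l.
Qed.

Lemma bin_half n k : 'C(n, k) <= 'C(n, n./2).
Proof.
case: (leqP k n./2) => hk.
  apply: bin_mono => //; rewrite -{2}(odd_double_half n); lia.
case: (leqP k n) => kn; last by rewrite bin_small.
rewrite -bin_sub //; apply: bin_mono.
  have := odd_double_half n; lia.
rewrite -{2}(odd_double_half n); lia.
Qed.
Local Open Scope classical_set_scope.
Local Open Scope ring_scope.
Local Open Scope classical_set_scope.
Lemma in_bigU (T : Type) (I : eqType) (r : seq I) (F : I -> set T) x :
  (\big[setU/set0]_(i <- r) F i) x <-> exists i, i \in r /\ F i x.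
Proof.
elim: r => [|a r IH]; first by rewrite big_nil; split => // -[i []].
rewrite big_cons; split.
  by case=> [h|/IH [i [ir h]]]; [exists a; rewrite inE eqxx | exists i; rewrite inE ir orbT].
case=> i []; rewrite inE => /orP[/eqP -> h|ir h]; [by left|by right; apply/IH; exists i; split].
Qed.

Lemma in_bigI (T : Type) (I : eqType) (r : seq I) (P : pred I) (F : I -> set T) x :
  (\big[setI/setT]_(i <- r | P i) F i) x <-> forall i, i \in r -> P i -> F i x.
Proof.
elim: r => [|a r IH]; first by rewrite big_nil.
rewrite big_cons; case: ifP => Pa; split.
- case=> h1 /IH h2 i; rewrite inE => /orP[/eqP -> //|]; exact: h2.
- by move=> h; split; [apply: h; rewrite ?inE ?eqxx | apply/IH => i ir; apply: h; rewrite inE ir orbT].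
- move=> /IH h2 i; rewrite inE => /orP[/eqP -> |]; [by rewrite Pa | exact: h2].
- by move=> h; apply/IH => i ir; apply: h; rewrite inE ir orbT.
Qed.

Section P.
Context {d : measure_display} {T : measurableType d} {R : realType}.
Variable P : probability T R.
Definition pr (A : set T) : R := fine (P A).

Lemma pr_ge0 A : 0 <= pr A.
Proof. exact/fine_ge0/measure_ge0. Qed.

Lemma pr_le A B : measurable A -> measurable B -> A `<=` B -> pr A <= pr B.
Proof.
move=> mA mB AB; apply: fine_le; rewrite ?inE ?fin_num_measure //.
by apply: le_measure; rewrite ?inE.
Qed.

Lemma pr_U A B : measurable A -> measurable B -> pr (A `|` B) <= pr A + pr B.
Proof.
move=> mA mB; rewrite /pr -fineD ?fin_num_measure //.
have mAB : measurable (A `|` B) by exact: measurableU.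
apply: fine_le; rewrite ?inE ?fin_num_measure ?fin_numD ?fin_num_measure //.
exact: measureU2.
Qed.

Lemma pr_Ud A B : measurable A -> measurable B -> A `&` B = set0 -> pr (A `|` B) = pr A + pr B.
Proof.
move=> mA mB AB; rewrite /pr -fineD ?fin_num_measure // measureU //.
Qed.

Lemma pr0 : pr set0 = 0.
Proof. by rewrite /pr measure0. Qed.

Lemma pr_bigU (I : Type) (r : seq I) (F : I -> set T) :
  (forall i, measurable (F i)) ->
  pr (\big[setU/set0]_(i <- r) F i) <= \sum_(i <- r) pr (F i).
Proof.
move=> mF; elim: r => [|a r IH]; first by rewrite !big_nil pr0.
rewrite !big_cons; apply: le_trans; first apply: pr_U => //.
  exact: bigsetU_measurable.
by rewrite lerD2l.
Qed.

Lemma pr_bigUd (I : eqType) (r : seq I) (F : I -> set T) :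
  uniq r -> (forall i, measurable (F i)) ->
  (forall i j, i != j -> F i `&` F j = set0) ->
  pr (\big[setU/set0]_(i <- r) F i) = \sum_(i <- r) pr (F i).
Proof.
move=> + mF dF; elim: r => [|a r IH]; first by rewrite !big_nil pr0.
rewrite /= => /andP[ar ur].
rewrite !big_cons pr_Ud ?IH //; first exact: bigsetU_measurable.
rewrite big_distrr /= big_seq big1 // => i ir; apply: dF.
by apply/eqP => ai; rewrite ai ir in ar.
Qed.
End P.

Theorem lemma2
  (d : measure_display) (T : measurableType d) (R : realType)
  (P : probability T R)
  (S : finType) (M : nat) (tau : R)
  (In : set T)                 (* the event x \in X^in *)
  (sx : T -> S)                (* the correct output s_x *)
  (m : 'I_M -> T -> S)         (* the predictions m_i(x) *)
  (beta : 'I_M -> R)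
  (hN : (2 <= #|S|)%N)
  (hIn : measurable In)
  (hInpos : (0 < P In)%E)
  (hsx : forall s, measurable (sx @^-1` [set s]))
  (hm : forall i s, measurable (m i @^-1` [set s]))
  (htau : 0 < tau <= 1)
  (hK : exists K : nat, (0 < K)%N /\ K%:R = M%:R * (1 - tau))
  (hbeta : forall i, beta i = cprob P In [set w | m i w = sx w])
  (* (A1) *)
  (hA1 : forall i, (#|S|%:R)^-1 < beta i)
  (* independence + (A2): conditionally on x \in X^in (and on the value c of s_x),
     the predictions are independent, correct w.p. beta_i, and equal to each
     incorrect string w.p. (1 - beta_i)/(N_S - 1) *)
  (hind : forall c : S, (0 < P (In `&` sx @^-1` [set c]))%E ->
     cond_indep P (In `&` sx @^-1` [set c]) m)
  (hA2 : forall (c : S) i (s : S), (0 < P (In `&` sx @^-1` [set c]))%E ->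
     cprob P (In `&` sx @^-1` [set c]) (m i @^-1` [set s])
     = if s == c then beta i else (1 - beta i) / (#|S|%:R - 1))
  (* independence + (A3) on x \in X^out *)
  (hindout : (0 < P (~` In))%E -> cond_indep P (~` In) m)
  (hA3 : forall i (s : S), (0 < P (~` In))%E ->
     cprob P (~` In) (m i @^-1` [set s]) = (#|S|%:R)^-1) :
  cprob P In [set w | exists s : S, s <> sx w /\
                       M%:R * (1 - tau) + 1 <= (nvotes m w s)%:R]
  < Ebound M #|S| tau.
Proof.
have hNr : 2 <= (#|S|%:R : R) by rewrite (ler_nat R 2).
case: hK => K [K0 hKe].
have MK : (K < M)%N.
  rewrite -(ltr_nat R) hKe; case/andP: htau => t0 t1.
  have : 0 < (M%:R : R) * (1 - tau) by rewrite -hKe ltr0n.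
  nra.
set Nr := (#|S|%:R : R).
set In_ := fun c => In `&` sx @^-1` [set c].
set A := fun s (J : {set 'I_M}) => \big[setI/setT]_(i in J) (m i @^-1` [set s]).
set F := fun c s (J : {set 'I_M}) => if (s != c) && (#|J| == K.+1) then A s J `&` In_ c else set0.
set Q := Nr^-1 ^+ K.+1.
have mIn_ : forall c, measurable (In_ c) by move=> c; exact: measurableI.
have mA : forall s J, measurable (A s J) by move=> s J; apply: bigsetI_measurable.
have mF : forall c s J, measurable (F c s J).
  by move=> c s J; rewrite /F; case: ifP => _ //; exact: measurableI.
set E := [set w | _].
have hE : E `&` In = \big[setU/set0]_(c <- index_enum S) \big[setU/set0]_(s <- index_enum S)
   \big[setU/set0]_(J <- index_enum {set 'I_M}) F c s J.
  apply/seteqP; split => w.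
    case=> -[s [sw hs]] Iw; apply/in_bigU; exists (sx w); split; first by rewrite mem_index_enum.
    apply/in_bigU; exists s; split; first by rewrite mem_index_enum.
    have : (K.+1 <= nvotes m w s)%N.
      by rewrite -(ler_nat R) -addn1 natrD hKe.
    case/card_geqP => l [ul sl sub].
    apply/in_bigU; exists [set i in l]; split; first by rewrite mem_index_enum.
    rewrite /F ifT; last first.
      apply/andP; split; first by apply/eqP.
      by rewrite cardsE (card_uniqP ul) sl.
    split; last by split.
    apply/in_bigI => i _; rewrite inE => il.
    by have := sub i il; rewrite inE => /eqP.
  move=> /in_bigU [c [_ /in_bigU [s [_ /in_bigU [J [_]]]]]].
  rewrite /F; case: ifP => // /andP[sc /eqP cJ] [hA [Iw /= wc]].
  split => //; exists s; split; first by rewrite wc; apply/eqP.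
  rewrite -hKe; have -> : (K%:R + 1 : R) = K.+1%:R by rewrite -addn1 natrD.
  rewrite ler_nat -cJ /nvotes.
  have sub : J \subset [set i | m i w == s].
    apply/fintype.subsetP => i iJ; rewrite inE.
  by move/in_bigI: hA => /(_ i (mem_index_enum _) iJ) /= ->.
  exact: subset_leq_card.
have hpart : \big[setU/set0]_(c <- index_enum S) In_ c = In.
  apply/seteqP; split => w.
    by move=> /in_bigU [c [_ []]].
  by move=> Iw; apply/in_bigU; exists (sx w); split; [rewrite mem_index_enum|].
have hsumIn : \sum_(c <- index_enum S) pr P (In_ c) = pr P In.
  rewrite -hpart pr_bigUd //; first exact: index_enum_uniq.
  move=> c c' cc'; apply/seteqP; split => // w [[_ /= h1] [_ /= h2]].
  by move: cc'; rewrite -h1 -h2 eqxx.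
have hJ : forall x : R, \sum_(J <- index_enum {set 'I_M}) (if #|J| == K.+1 then x else 0) = x *+ 'C(M, K.+1).
  move=> x; rewrite -big_mkcond /=.
  rewrite (eq_bigl (fun J => J \in [set J : {set 'I_M} | #|J| == K.+1]%SET)); last by move=> J; rewrite finset.inE.
  by rewrite sumr_const card_draws card_ord.
have hS : forall c (x : R), \sum_(s <- index_enum S) (if s != c then x else 0) = x *+ #|S|.-1.
  move=> c x; rewrite -big_mkcond /=.
  rewrite (eq_bigl (fun s => s \in [set~ c]%SET)); last by move=> s; rewrite !finset.inE.
  by rewrite sumr_const cardsC1.
have cprob_ge0 : forall B A', 0 <= cprob P B A'.
  by move=> B A'; rewrite /cprob divr_ge0 // fine_ge0 // measure_ge0.
have Nr0 : Nr != 0 by rewrite gt_eqF //; lra.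
have qle : forall i, (1 - beta i) / (Nr - 1) <= Nr^-1.
  move=> i; have := hA1 i; rewrite -/Nr => h.
  rewrite ler_pdivrMr; last lra.
  have -> : Nr^-1 * (Nr - 1) = 1 - Nr^-1 by rewrite mulrBr mulVf // mulr1.
  lra.
have hF : forall c s J, pr P (F c s J) <= (if (s != c) && (#|J| == K.+1) then pr P (In_ c) * Q else 0).
  move=> c s J; rewrite /F; case: ifP => [/andP[sc /eqP cJ]|_]; last by rewrite pr0.
  case: (leP (P (In_ c)) 0%E) => [hz|hpos].
    have h0 : P (In_ c) = 0%E by apply/eqP; rewrite eq_le hz measure_ge0.
    have : pr P (A s J `&` In_ c) <= pr P (In_ c).
      by apply: pr_le; [exact: measurableI | exact: mIn_ | exact: subIsetr].
    by rewrite /pr h0 /= mul0r.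
  have prpos : 0 < pr P (In_ c).
    by apply: fine_gt0; rewrite hpos /= ltey_eq fin_num_measure.
  have -> : pr P (A s J `&` In_ c) = cprob P (In_ c) (A s J) * pr P (In_ c).
    by rewrite /cprob /pr divfK // gt_eqF.
  rewrite [X in _ <= X]mulrC ler_pM2r //.
  have -> : cprob P (In_ c) (A s J) = \prod_(i in J) cprob P (In_ c) (m i @^-1` [set s]).
    exact: (hind c hpos J (fun=> s)).
  rewrite /Q -cJ -prodr_const; apply: ler_prod => i _.
  rewrite cprob_ge0 /=; rewrite hA2 // ifN //.
have prIn : 0 < pr P In.
  by apply: fine_gt0; rewrite hInpos /= ltey_eq fin_num_measure.
set B' := Q *+ 'C(M, K.+1) *+ #|S|.-1.
have key : pr P (E `&` In) <= pr P In * B'.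
  rewrite hE -hsumIn mulr_suml.
  apply: le_trans.
    apply: pr_bigU => c; apply: bigsetU_measurable => s _; apply: bigsetU_measurable => J _; exact: mF.
  apply: ler_sum => c _.
  apply: le_trans.
    apply: pr_bigU => s; apply: bigsetU_measurable => J _; exact: mF.
  apply: (@le_trans _ _ (\sum_(s <- index_enum S) \sum_(J <- index_enum {set 'I_M})
      (if (s != c) && (#|J| == K.+1) then pr P (In_ c) * Q else 0))).
    apply: ler_sum => s _; apply: le_trans.
      apply: pr_bigU => J; exact: mF.
    apply: ler_sum => J _; exact: hF.
  have -> : \sum_(s <- index_enum S) \sum_(J <- index_enum {set 'I_M})
      (if (s != c) && (#|J| == K.+1) then pr P (In_ c) * Q else 0)
      = \sum_(s <- index_enum S) (if s != c then (pr P (In_ c) * Q) *+ 'C(M, K.+1) else 0).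
    apply: eq_bigr => s _; case: (s != c) => /=; first exact: hJ.
    by rewrite big1.
  by rewrite hS /B' !mulrnAr.
apply: (@le_lt_trans _ _ B').
  change (pr P (E `&` In) / pr P In <= B').
  by rewrite ler_pdivrMr // mulrC.
rewrite /Ebound -hKe -/Nr powR_invn; last lra.
have hC : ('C(M, K.+1)%:R : R) <= 'C(M, M./2)%:R by rewrite ler_nat bin_half.
have hC0 : (0 : R) <= 'C(M, K.+1)%:R by [].
set y := Nr ^- K.
have y0 : 0 < y by rewrite /y invr_gt0 exprn_gt0 //; lra.
set z := Nr^-1.
have z0 : 0 < z by rewrite /z invr_gt0; lra.
have Nz : Nr * z = 1 by rewrite /z mulfV.
have hQ : Q = z * y by rewrite /Q exprS exprVn.
have hN1 : (#|S|.-1%:R : R) = Nr - 1 by rewrite -subn1 natrB ?(ltnW hN) // .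
rewrite /B' -[_ *+ #|S|.-1]mulr_natr -[Q *+ _]mulr_natr hN1 hQ.
move: hC hC0; set C := ('C(M, K.+1)%:R : R); set C' := ('C(M, M./2)%:R : R) => hC hC0.
have e : z * y * C * (Nr - 1) = y * C * (1 - z).
  have -> : z * y * C * (Nr - 1) = y * C * (Nr * z - z) by ring.
  by rewrite Nz.
rewrite e.
have z1 : 0 <= 1 - z.
  have : z * 2 <= z * Nr by rewrite ler_pM2l.
  rewrite [z * Nr]mulrC Nz; lra.
have h1 : y * C * (1 - z) <= y * C' * (1 - z).
  by rewrite ler_wpM2r // ler_wpM2l // ltW.
have Cp : 0 < C' by rewrite ltr0n bin_gt0 leq_half_double -addnn; apply: leq_trans (leq_addr _ _) _.
have h2 : 0 < C' * y * z by rewrite !mulr_gt0.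
have e2 : y * C' * (1 - z) = C' * y - C' * y * z by ring.
lra.
Qed.
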